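(* Every $\epsilon_4$-segment expath $P$ from $u$ to $v$ in $G$ is an $\epsilon_4$-expath.
   Context: $G=(V,E)$ is an undirected graph with $n$ vertices and real edge weights in $[1,W]$; $|P|$ is the weighted length of a path $P$ and $P[a,b]$ its subpath between $a$ and $b$. Let $V=U_1,U_2,\dots,U_p$ be subsets of $V$; the level $l(v)$ of $v$ is the largest $l$ with $v\in U_l$, and $G_i$ is the subgraph of $G$ induced by the vertices of level $\le i$. Let $\epsilon_4$ be a real parameter with $0<\epsilon_4<\sqrt2-1$. $\epsilon_4$-segments: for a path $P=(u=v_0,\dots,v_\ell=v)$ and $1\le i,j<\ell$, $v_i,v_j$ lie in the same segment if either both $|P[u,v_i]|,|P[u,v_j]|\le|P|/2$ and $\lfloor\log_{1+\epsilon_4}|P[u,v_i]|\rfloor=\lfloor\log_{1+\epsilon_4}|P[u,v_j]|\rfloor$, or both $|P[v_i,v]|,|P[v_j,v]|<|P|/2$ and $\lfloor\log_{1+\epsilon_4}|P[v_i,v]|\rfloor=\lfloor\log_{1+\epsilon_4}|P[v_j,v]|\rfloor$; classes are contiguous subpaths and $u,v$ are in no segment. $P$ is an $\epsilon_4$-segment expath if every segment $P[x,y]$ is a shortest path in $G_i$ for some $1\le i\le p$. Let $B=\lceil\log_{1+\epsilon_4}(nW)\rceil$. $P$ (from $u$ to $v$) is an $\epsilon_4$-expath if it is the concatenation $e_0,P_0,e_1,P_1,\dots,e_{2B+1},P_{2B+1},e_{2B+2}$ where each $e_i$ is empty or a single edge and each $P_k=P[u_k,v_k]$ is either empty or a shortest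 path in $G_i$ for some $1\le i\le p$, and moreover $|P[u,v_k]|\le(1+\epsilon_4)^k$ whenever $k<B+1$ and $|P[u_k,v]|\le(1+\epsilon_4)^{2B+1-k}$ whenever $k\ge B+1$ (for nonempty $P_k$). *)

(* Defs.v *)
From HB Require Import structures.
From mathcomp Require Import all_boot all_order all_algebra.
From mathcomp Require Import reals exp.
Set Implicit Arguments. Unset Strict Implicit. Unset Printing Implicit Defensive.
Import Order.TTheory GRing.Theory Num.Theory.
Local Open Scope ring_scope.

Section Expath.
Variables (R : realType) (T : finType).

Definition level (p : nat) (U : nat -> {set T}) (v : T) : nat :=
  \max_(1 <= l < p.+1 | v \in U l) l.

Definition Gadj (adj : rel T) (p : nat) (U : nat -> {set T}) (i : nat) : rel T :=
  fun x y => [&& adj x y, (level p U x <= i)%N & (level p U y <= i)%N].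

(* The path P = u :: s ; its i-th vertex (i = 0 .. size s). *)
Definition vtx (u : T) (s : seq T) (i : nat) : T := nth u (u :: s) i.

Definition seglen (w : T -> T -> R) (u : T) (s : seq T) (a b : nat) : R :=
  \sum_(a <= k < b) w (vtx u s k) (vtx u s k.+1).

Definition plen (w : T -> T -> R) (x : T) (q : seq T) : R :=
  seglen w x q 0 (size q).

Definition shortest_sub (adj : rel T) (w : T -> T -> R) (p : nat)
    (U : nat -> {set T}) (u : T) (s : seq T) (a b : nat) : Prop :=
  exists i : nat, [/\ (1 <= i <= p)%N,
    (forall c, (a <= c <= b)%N -> (level p U (vtx u s c) <= i)%N) &
    (forall q : seq T, path (Gadj adj p U i) (vtx u s a) q ->
       last (vtx u s a) q = vtx u s b ->
       seglen w u s a b <= plen w (vtx u s a) q)].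

Definition flog (eps x : R) : int := Num.floor (ln x / ln (1 + eps)).

Definition internal (s : seq T) (i : nat) : bool := (0 < i < size s)%N.

Definition same_seg (w : T -> T -> R) (eps : R) (u : T) (s : seq T) (i j : nat)
  : Prop :=
  let L := seglen w u s 0 (size s) in
  internal s i /\ internal s j /\
  ((seglen w u s 0 i <= L / 2 /\ seglen w u s 0 j <= L / 2 /\
    flog eps (seglen w u s 0 i) = flog eps (seglen w u s 0 j)) \/
   (seglen w u s i (size s) < L / 2 /\ seglen w u s j (size s) < L / 2 /\
    flog eps (seglen w u s i (size s)) = flog eps (seglen w u s j (size s)))).

(* P[v_a, v_b] is a segment: v_a, v_b are the first and last vertices of a class *)
Definition is_segment (w : T -> T -> R) (eps : R) (u : T) (s : seq T) (a b : nat)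
  : Prop :=
  same_seg w eps u s a b /\ (a <= b)%N /\
  (forall c, same_seg w eps u s a c -> (a <= c <= b)%N).

Definition segment_expath (adj : rel T) (w : T -> T -> R) (p : nat)
    (U : nat -> {set T}) (eps : R) (u : T) (s : seq T) : Prop :=
  forall a b, is_segment w eps u s a b -> shortest_sub adj w p U u s a b.

Definition Bnum (eps W : R) : nat :=
  `|Num.ceil (ln (#|T|%:R * W) / ln (1 + eps))|%N.

(* eps-expath: P = e_0 P_0 e_1 P_1 ... e_{2B+1} P_{2B+1} e_{2B+2}.
   Pieces are given by cut indices x 0 = 0 <= x 1 <= ... <= x (4B+5) = size s;
   piece j spans the vertices v_(x j) .. v_(x j.+1).  Even j = 2k is e_k
   (at most one edge); odd j = 2k+1 is P_k = P[u_k, v_k] with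
   u_k = v_(x (2k+1)), v_k = v_(x (2k+2)). *)
Definition expath (adj : rel T) (w : T -> T -> R) (p : nat)
    (U : nat -> {set T}) (eps W : R) (u : T) (s : seq T) : Prop :=
  let B := Bnum eps W in
  exists x : nat -> nat,
    [/\ x 0%N = 0%N, x (4 * B + 5)%N = size s,
     (forall j, (j < 4 * B + 5)%N -> (x j <= x j.+1)%N),
     (forall k, (k <= 2 * B + 2)%N -> (x (2 * k).+1 - x (2 * k) <= 1)%N) &
     (forall k, (k <= 2 * B + 1)%N ->
        x (2 * k).+1 = x (2 * k).+2 \/
        [/\ shortest_sub adj w p U u s (x (2 * k).+1) (x (2 * k).+2),
            ((k < B + 1)%N -> seglen w u s 0 (x (2 * k).+2) <= (1 + eps) ^+ k) &
            ((B + 1 <= k)%N ->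
               seglen w u s (x (2 * k).+1) (size s) <= (1 + eps) ^+ (2 * B + 1 - k))])].

End Expath.

(* Main.v *)
Require Import Defs.
From HB Require Import structures.
From mathcomp Require Import all_boot all_order all_algebra.
From mathcomp Require Import reals exp.
From mathcomp Require Import lra zify.
Import Order.TTheory GRing.Theory Num.Theory.
Set Implicit Arguments. Unset Strict Implicit.
Local Open Scope ring_scope.

Lemma lnc_gt0 (R : realType) (eps : R) : 0 < eps -> 0 < ln (1 + eps).
Proof. by move=> he; apply: ln_gt0; rewrite ltrDl. Qed.

Lemma flog_ge0 (R : realType) (eps x : R) : 0 < eps -> 1 <= x -> 0 <= flog eps x.
Proof.
move=> he hx; rewrite /flog floor_ge0; apply: divr_ge0; first exact: ln_ge0.
exact/ltW/lnc_gt0.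
Qed.

Lemma flog_le (R : realType) (eps x y : R) : 0 < eps -> 0 < x -> x <= y ->
  flog eps x <= flog eps y.
Proof.
move=> he hx hxy; rewrite /flog; apply: le_floor.
have hy : 0 < y by apply: lt_le_trans hxy.
rewrite ler_pM2r ?invr_gt0 ?lnc_gt0 //.
by rewrite ler_ln // posrE.
Qed.

Lemma flog_ub (R : realType) (eps x : R) (m : nat) : 0 < eps -> 0 < x ->
  flog eps x = m%:Z -> x < (1 + eps) ^+ m.+1.
Proof.
move=> he hx hf.
have := floorD1_gt (ln x / ln (1 + eps)); rewrite -/(flog eps x) hf.
have hc := lnc_gt0 he.
rewrite ltr_pdivrMr // => h.
have hp : 0 < (1 + eps) ^+ m.+1 by apply: exprn_gt0; rewrite addr_gt0.
rewrite -ltr_ln ?posrE // lnXn ?addr_gt0 //.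
apply: (lt_le_trans h); rewrite -mulr_natl mulrC.
have -> : ((m%:Z + 1)%:~R : R) = (m.+1)%:R by rewrite intrD natr1.
by rewrite mulrC.
Qed.

Lemma flog_lt (R : realType) (eps x X : R) (B : nat) : 0 < eps -> 0 < x -> x < X ->
  ln X / ln (1 + eps) <= B%:R -> flog eps x < B%:Z.
Proof.
move=> he hx hxX hB; rewrite /flog floor_lt_int.
have hX : 0 < X by apply: lt_trans hxX.
apply: (lt_le_trans _ hB).
rewrite ltr_pM2r ?invr_gt0 ?lnc_gt0 //.
by rewrite ltr_ln // posrE.
Qed.
Lemma seglen_split (R : realType) (T : finType) (w : T -> T -> R) u s a b c :
  (a <= b <= c)%N -> seglen w u s a c = seglen w u s a b + seglen w u s b c.
Proof. by move=> /andP[h1 h2]; rewrite /seglen (big_cat_nat h1 h2). Qed.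

Lemma path_adj (T : finType) (adj : rel T) u s k :
  path adj u s -> (k < size s)%N -> adj (vtx u s k) (vtx u s k.+1).
Proof. by move=> /(pathP u) h hk; exact: h. Qed.

Lemma seglen_ge (R : realType) (T : finType) (adj : rel T) (w : T -> T -> R) u s a b :
  path adj u s -> (forall x y, adj x y -> 1 <= w x y) -> (b <= size s)%N ->
  (b - a)%:R <= seglen w u s a b.
Proof.
move=> hp hw hb; rewrite /seglen -[X in X <= _]mulr1 -sumr_const_nat mulr1.
apply: ler_sum_nat => i /andP[_ hi]; apply: hw; apply: path_adj hp _.
exact: leq_trans hi hb.
Qed.

Lemma seglen_le (R : realType) (T : finType) (adj : rel T) (w : T -> T -> R) (W : R) u s a b :
  path adj u s -> (forall x y, adj x y -> w x y <= W) -> (b <= size s)%N ->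
  seglen w u s a b <= W *+ (b - a).
Proof.
move=> hp hw hb; rewrite /seglen -sumr_const_nat.
apply: ler_sum_nat => i /andP[_ hi]; apply: hw; apply: path_adj hp _.
exact: leq_trans hi hb.
Qed.

Lemma count_down (P : pred nat) n :
  (forall i j, (1 <= i <= j)%N -> (j <= n)%N -> P j -> P i) ->
  forall i, (1 <= i <= n)%N -> P i = (i <= count P (iota 1 n))%N.
Proof.
elim: n => [|n IH] hP i hi; first by case/andP: hi => h1 h2; move: (leq_trans h1 h2).
have -> : iota 1 n.+1 = iota 1 n ++ [:: n.+1].
  by rewrite -(addn1 n) iotaD addnC.
rewrite count_cat /= addn0.
case hn : (P n.+1).
  have hall : count P (iota 1 n) = n.
    rewrite -[RHS](size_iota 1 n) -count_predT; apply: eq_in_count => j.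
    rewrite mem_iota => /andP[h1 h2]; apply: (hP j n.+1) => //.
    by rewrite h1 /= (ltnW h2).
  rewrite hall addn1; case/andP: hi => h1 h2; rewrite h2.
  by apply: (hP i n.+1) => //; rewrite h1 h2.
rewrite addn0; case/andP: hi => h1 h2.
rewrite leq_eqVlt in h2; case/orP: h2 => [/eqP -> | h2].
  rewrite hn; apply/esym/negbTE; rewrite -ltnNge ltnS.
  by apply: leq_trans (count_size _ _) _; rewrite size_iota.
apply: IH; last by rewrite h1.
by move=> a b hab hb; apply: hP => //; apply: leqW.
Qed.

Theorem lemma4p5 (R : realType) (T : finType) (adj : rel T) (w : T -> T -> R)
    (W : R) (p : nat) (U : nat -> {set T}) (eps : R) (u v : T) (s : seq T) :
  symmetric adj -> irreflexive adj ->
  (forall x y, w x y = w y x) ->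
  (forall x y, adj x y -> 1 <= w x y <= W) ->
  (1 <= p)%N -> U 1%N = [set: T] ->
  0 < eps -> eps < Num.sqrt 2 - 1 ->
  path adj u s -> uniq (u :: s) -> last u s = v ->
  segment_expath adj w p U eps u s ->
  expath adj w p U eps W u s.
Proof.
move=> hsym hirr hwsym hw hp1 hU1 he he2 hpath huniq hlast hseg.
pose n := size s.
pose L := seglen w u s 0 n.
pose B := Bnum T eps W.
have hw1 : forall x y, adj x y -> 1 <= w x y by move=> x y /hw /andP[].
have hwW : forall x y, adj x y -> w x y <= W by move=> x y /hw /andP[].
pose pre i := seglen w u s 0 i.
pose suf i := seglen w u s i n.
have hpre1 : forall i, (0 < i <= n)%N -> 1 <= pre i.
  move=> i /andP[h1 h2]; apply: le_trans (seglen_ge 0 hpath hw1 h2).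
  by rewrite subn0 ler1n.
have hsuf1 : forall i, (i < n)%N -> 1 <= suf i.
  move=> i h; apply: le_trans (seglen_ge i hpath hw1 (leqnn n)).
  by rewrite ler1n subn_gt0.
have hsum : forall i, (i <= n)%N -> pre i + suf i = L.
  by move=> i h; rewrite /L (@seglen_split _ _ w u s 0 i n).
have hpremono : forall i j, (i <= j <= n)%N -> pre i <= pre j.
  move=> i j /andP[h1 h2]; rewrite /pre (@seglen_split _ _ w u s 0 i j) //.
  rewrite lerDl; apply: le_trans (seglen_ge i hpath hw1 h2); exact: ler0n.
have hsufmono : forall i j, (i <= j <= n)%N -> suf j <= suf i.
  move=> i j /andP[h1 h2]; rewrite /suf (@seglen_split _ _ w u s i j n) ?h1 //.
  rewrite lerDr; apply: le_trans (seglen_ge i hpath hw1 h2); exact: ler0n.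
have hX : (0 < n)%N -> L < #|T|%:R * W.
  move=> hn.
  have hW1 : 1 <= W by apply: le_trans (hw1 _ _ (path_adj hpath hn)) (hwW _ _ (path_adj hpath hn)).
  have hT : (n < #|T|)%N.
    move/card_uniqP: huniq => hcard.
    by have := max_card (mem (u :: s)); rewrite hcard.
  apply: le_lt_trans (seglen_le 0 hpath hwW (leqnn n)) _.
  by rewrite subn0 -(mulr_natl W n) ltr_pM2r ?ltr_nat // (lt_le_trans ltr01).
have hBnd : (0 < n)%N -> ln (#|T|%:R * W) / ln (1 + eps) <= B%:R.
  move=> hn.
  have hW1 : 1 <= W by apply: le_trans (hw1 _ _ (path_adj hpath hn)) (hwW _ _ (path_adj hpath hn)).
  have hT1 : 1 <= (#|T|%:R : R).
    by rewrite ler1n; apply/card_gt0P; exists u.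
  have hy : 0 <= ln (#|T|%:R * W) / ln (1 + eps).
    apply: divr_ge0; last exact/ltW/lnc_gt0.
    apply: ln_ge0; nra.
  rewrite /B /Bnum natr_absz ger0_norm; first exact: ceil_ge.
  by rewrite ceil_ge0 (lt_le_trans _ hy) // ltrN10.
have hnle : forall i, (i <= n)%N -> suf i < L/2 -> ~~ (pre i <= L/2).
  by move=> i hi hs; rewrite -ltNge; have := hsum i hi; lra.
have hsuflt : forall i, (i <= n)%N -> ~~ (pre i <= L/2) -> suf i < L/2.
  by move=> i hi; rewrite -ltNge => hs; have := hsum i hi; lra.
have hfl_pre : forall i, (0 < i < n)%N -> pre i <= L/2 ->
    flog eps (pre i) = (`|flog eps (pre i)|%N)%:Z /\ (`|flog eps (pre i)| < B)%N.
  move=> i /andP[h1 h2] hle.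
  have hn : (0 < n)%N by apply: ltn_trans h1 h2.
  have hp1' := hpre1 i ltac:(by rewrite h1 ltnW).
  have hs1 := hsuf1 i h2.
  have h0 := flog_ge0 he hp1'.
  rewrite gez0_abs //; split => //.
  rewrite -ltz_nat gez0_abs //; apply: (flog_lt he _ _ (hBnd hn)).
    exact: lt_le_trans ltr01 hp1'.
  apply: le_lt_trans (hX hn); have := hsum i (ltnW h2); lra.
have hfl_suf : forall i, (0 < i < n)%N -> ~~ (pre i <= L/2) ->
    flog eps (suf i) = (`|flog eps (suf i)|%N)%:Z /\ (`|flog eps (suf i)| < B)%N.
  move=> i /andP[h1 h2] hle.
  have hn : (0 < n)%N by apply: ltn_trans h1 h2.
  have hp1' := hpre1 i ltac:(by rewrite h1 ltnW).
  have hs1 := hsuf1 i h2.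
  have hsl := hsuflt i (ltnW h2) hle.
  have h0 := flog_ge0 he hs1.
  rewrite gez0_abs //; split => //.
  rewrite -ltz_nat gez0_abs //; apply: (flog_lt he _ _ (hBnd hn)).
    exact: lt_le_trans ltr01 hs1.
  apply: le_lt_trans (hX hn); have := hsum i (ltnW h2); lra.
pose f1 i := `|flog eps (pre i)|%N.
pose f2 i := `|flog eps (suf i)|%N.
pose slot i := if pre i <= L/2 then (f1 i).+1 else (2*B - f2 i)%N.
have hslo : forall i, (0<i<n)%N -> pre i <= L/2 -> slot i = (f1 i).+1 /\ (slot i <= B)%N.
  move=> i hi hle; have [_ hb] := hfl_pre i hi hle.
  by rewrite /slot hle; split.
have hshi : forall i, (0<i<n)%N -> ~~ (pre i <= L/2) -> slot i = (2*B - f2 i)%N /\ (B < slot i)%N.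
  move=> i hi hle; have [_ hb] := hfl_suf i hi hle.
  rewrite /slot (negbTE hle); split => //.
  rewrite /f2; lia.
have hss : forall i j, same_seg w eps u s i j <-> [/\ (0<i<n)%N, (0<j<n)%N & slot i = slot j].
  move=> i j; split.
    case=> hi [hj H]; split; [exact hi | exact hj |].
    case: H => [[a [b c]] | [a [b c]]].
      have [-> _] := hslo i hi a; have [-> _] := hslo j hj b.
      by congr (_.+1); rewrite /f1; congr absz; exact: c.
    have hli := hnle i (ltnW (andP hi).2) a; have hlj := hnle j (ltnW (andP hj).2) b.
    have [-> _] := hshi i hi hli; have [-> _] := hshi j hj hlj.
    by congr (_ - _)%N; rewrite /f2; congr absz; exact: c.
  case=> hi hj hsl; split; first exact hi; split; first exact hj.
  case: (boolP (pre i <= L/2)) => hli; case: (boolP (pre j <= L/2)) => hlj.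
  - left; split; first by [exact hli | done]; split; first by [exact hlj | done].
    have [e1 _] := hfl_pre i hi hli; have [e2 _] := hfl_pre j hj hlj.
    have [s1 _] := hslo i hi hli; have [s2 _] := hslo j hj hlj.
    change (flog eps (pre i) = flog eps (pre j)); rewrite e1 e2; congr Posz.
    by move: hsl; rewrite s1 s2 => /succn_inj h; exact: h.
  - by move: (hslo i hi hli).2 (hshi j hj hlj).2; rewrite hsl; lia.
  - by move: (hshi i hi hli).2 (hslo j hj hlj).2; rewrite hsl; lia.
  - right; split; first by [exact (hsuflt i (ltnW (andP hi).2) hli) | done].
    split; first by [exact (hsuflt j (ltnW (andP hj).2) hlj) | done].
    have [e1 b1] := hfl_suf i hi hli; have [e2 b2] := hfl_suf j hj hlj.
    have [s1 _] := hshi i hi hli; have [s2 _] := hshi j hj hlj.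
    change (flog eps (suf i) = flog eps (suf j)); rewrite e1 e2; congr Posz.
    move: hsl b1 b2; rewrite s1 s2 /f2; lia.
have hmono : forall i j, (0 < i <= j)%N -> (j < n)%N -> (slot i <= slot j)%N.
  move=> i j /andP[h1 h2] h3.
  have hi : (0 < i < n)%N by rewrite h1 (leq_ltn_trans h2 h3).
  have hj : (0 < j < n)%N by rewrite (leq_trans h1 h2) h3.
  case: (boolP (pre i <= L/2)) => hli; case: (boolP (pre j <= L/2)) => hlj.
  - have [e1 _] := hfl_pre i hi hli; have [e2 _] := hfl_pre j hj hlj.
    have [-> _] := hslo i hi hli; have [-> _] := hslo j hj hlj.
    rewrite ltnS -lez_nat; change ((`|flog eps (pre i)|%N)%:Z <= (`|flog eps (pre j)|%N)%:Z)%R.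
    rewrite -e1 -e2; apply: flog_le he _ _.
      exact: lt_le_trans ltr01 (hpre1 i ltac:(by rewrite h1 ltnW // (leq_ltn_trans h2 h3))).
    by apply: hpremono; rewrite h2 ltnW.
  - by move: (hslo i hi hli).2 (hshi j hj hlj).2; lia.
  - exfalso; move/negP: hli; apply; apply: le_trans hlj; apply: hpremono.
    by rewrite h2 ltnW.
  - have [e1 _] := hfl_suf i hi hli; have [e2 _] := hfl_suf j hj hlj.
    have [-> _] := hshi i hi hli; have [-> _] := hshi j hj hlj.
    apply: leq_sub2l; rewrite -lez_nat; change ((`|flog eps (suf j)|%N)%:Z <= (`|flog eps (suf i)|%N)%:Z)%R.
    rewrite -e1 -e2; apply: flog_le he _ _.
      exact: lt_le_trans ltr01 (hsuf1 j h3).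
    by apply: hsufmono; rewrite h2 ltnW.
pose c k := count (fun i => slot i < k)%N (iota 1 n.-1).
have hc : forall k i, (1 <= i <= n.-1)%N -> (slot i < k)%N = (i <= c k)%N.
  move=> k; apply: count_down => i j hij hj hs.
  have hjn : (j < n)%N by lia.
  exact: leq_ltn_trans (hmono i j hij hjn) hs.
have hcle : forall k, (c k <= n.-1)%N.
  by move=> k; rewrite -[X in (_ <= X)%N](size_iota 1 n.-1) count_size.
have hcmono : forall k k', (k <= k')%N -> (c k <= c k')%N.
  by move=> k k' h; apply: sub_count => i /= hi; exact: leq_trans hi h.
have hc0 : c 0%N = 0%N.
  by rewrite /c (@eq_count _ _ pred0) ?count_pred0 // => i; rewrite ltn0.
have hslot_bnd : forall i, (0<i<n)%N -> (0 < slot i <= 2*B)%N.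
  move=> i hi; case: (boolP (pre i <= L/2)) => hli.
    by have [e hb] := hslo i hi hli; lia.
  by have [e hb] := hshi i hi hli; lia.
have hcall : c (2*B+2)%N = n.-1.
  rewrite /c -[RHS](size_iota 1 n.-1) -count_predT; apply: eq_in_count => i.
  rewrite mem_iota => hi /=.
  have hi' : (0 < i < n)%N by lia.
  by have := hslot_bnd i hi'; lia.
pose x j := if j == (4*B+5)%N then n else if odd j then minn (c j./2).+1 (c (j./2).+1) else c j./2.
have hxe : forall k, x k.*2 = c k.
  move=> k; rewrite /x; have -> : (k.*2 == 4*B+5)%N = false by apply/negbTE; rewrite -mul2n; lia.
  by rewrite odd_double half_double.
have hxo : forall k, x k.*2.+1 = if k == (2*B+2)%N then n else minn (c k).+1 (c k.+1).
  move=> k; rewrite /x; have -> : (k.*2.+1 == 4*B+5)%N = (k == 2*B+2)%N.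
    by apply/eqP/eqP; rewrite -mul2n; lia.
  by case: ifP => // _; rewrite /= odd_double /= uphalf_double.
exists x; rewrite -/B -/n; split.
- have h := hxe 0%N; rewrite hc0 in h; exact h.
- by rewrite /x eqxx.
- move=> j; rewrite -(odd_double_half j); case: (odd j); rewrite ?add0n ?add1n;
    move: (j./2) => k hk.
    rewrite -doubleS hxe hxo ifF; first by rewrite geq_minr.
    by apply/negbTE; move: hk; rewrite -mul2n; lia.
  rewrite hxe hxo; case: ifP => _.
    exact: leq_trans (hcle k) (leq_pred n).
  by rewrite leq_min leqnSn hcmono.
- move=> k hk; rewrite mul2n hxo hxe; case: ifP => [/eqP ->|_].
    by rewrite hcall; lia.
  lia.
- move=> k hk; rewrite mul2n -doubleS hxe hxo ifF; last first.
    by apply/negbTE; lia.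
  case: (leqP (c k.+1) (c k).+1) => hab.
    by left.
  right.
  have hb1 := hcle k.+1.
  have ha_int : (0 < (c k).+1 < n)%N by lia.
  have hb_int : (0 < c k.+1 < n)%N by lia.
  have sa : slot (c k).+1 = k.
    have e2 : (slot (c k).+1 < k.+1)%N.
      by rewrite (hc k.+1 (c k).+1 ltac:(lia)); exact: ltnW hab.
    have e1 : ~~ (slot (c k).+1 < k)%N.
      by rewrite (hc k (c k).+1 ltac:(lia)) -ltnNge.
    lia.
  have sb : slot (c k.+1) = k.
    have e2 : (slot (c k.+1) < k.+1)%N.
      by rewrite (hc k.+1 (c k.+1) ltac:(lia)).
    have e1 : ~~ (slot (c k.+1) < k)%N.
      by rewrite (hc k (c k.+1) ltac:(lia)) -ltnNge; exact: ltn_trans (ltnSn _) hab.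
    lia.
  split.
  + apply: hseg; split; [|split].
    * by apply/hss; split; [lia|lia|rewrite sa sb].
    * exact: ltnW hab.
    * move=> c' /hss [_ hc' hsc]; rewrite sa in hsc.
      have g1 : (c' <= c k)%N = false by rewrite -(hc k c' ltac:(lia)) -hsc ltnn.
      have g2 : (c' <= c k.+1)%N by rewrite -(hc k.+1 c' ltac:(lia)) -hsc ltnSn.
      by rewrite ltnNge g1 g2.
  + move=> hkB.
    case: (boolP (pre (c k.+1) <= L/2)) => hl; last first.
      by have := (hshi _ hb_int hl).2; lia.
    have [e1 _] := hfl_pre _ hb_int hl; have [s1 _] := hslo _ hb_int hl.
    have h : pre (c k.+1) < (1+eps)^+(f1 (c k.+1)).+1.
      exact (flog_ub he (lt_le_trans ltr01 (hpre1 (c k.+1) ltac:(lia))) e1).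
    have hk' : (f1 (c k.+1)).+1 = k by lia.
    rewrite hk' in h; exact (ltW h).
  + move=> hkB.
    case: (boolP (pre (c k).+1 <= L/2)) => hl.
      by have := (hslo _ ha_int hl).2; lia.
    have [e1 b1] := hfl_suf _ ha_int hl; have [s1 _] := hshi _ ha_int hl.
    have b1' : (f2 (c k).+1 < B)%N := b1.
    have h : suf (c k).+1 < (1+eps)^+(f2 (c k).+1).+1.
      exact (flog_ub he (lt_le_trans ltr01 (hsuf1 (c k).+1 ltac:(lia))) e1).
    have hk' : (f2 (c k).+1).+1 = (2*B+1-k)%N by lia.
    rewrite hk' in h; exact (ltW h).
Qed.
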